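(* Let $m\in\{2,3,4,\dots\}$, $R>0$, and let $w\in C^1((0,\infty))$ with $w(y)>0$ for $y\ge R$. Define, for $r,t>0$ and $0\le\eta,\xi\le1$, $$K(r,t,\eta,\xi)=\frac{(r+t\eta-2t\eta\xi)^m}{\sqrt{r+t\eta-t\eta\xi}\,\sqrt{r-\xi t\eta}},\qquad \Theta(r,t,\eta,\xi)=\frac{(r+t\eta-2t\eta\xi)^2+r^2-t^2\eta^2}{2r(r+t\eta-2t\eta\xi)}.$$ Then for all $0\le\xi,\eta\le1$ and $(r,t)\in\Sigma_1:=\{(r,t)\in(0,\infty)^2: r-t\ge\max\{R,\delta t\}>0\}$, $$\frac{\partial}{\partial t}\Big\{K(r,t,\eta,\xi)\,w(r+t\eta-2t\eta\xi)\,T_{m-1}(\Theta(r,t,\eta,\xi))\Big\}\ge-\Big\{E_m\frac{w(r+t\eta-2t\eta\xi)}{r+t\eta-2t\eta\xi}+|w'(r+t\eta-2t\eta\xi)|\Big\}K(r,t,\eta,\xi),$$ where $E_m=m+\frac18+\frac{5\zeta_m(m-1)^2}{3}$.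
   Context: $T_{m-1}$ is the Chebyshev polynomial $T_k(z)=\frac{(-1)^k}{(2k-1)!!}(1-z^2)^{1/2}\frac{d^k}{dz^k}(1-z^2)^{k-1/2}$ with $k=m-1$. $\zeta_m\in(0,1]$ is a fixed constant depending only on $m$ such that $\frac12\le T_{m-1}(z)\le1$ and $0<T'_{m-1}(z)\le(m-1)^2$ for $\frac1{1+\zeta_m}\le z\le1$; $\eta_m\in(0,1]$ is a fixed constant depending only on $m$ such that the Legendre polynomial $P_{m-1}(z)=\frac{1}{2^{m-1}(m-1)!}\frac{d^{m-1}}{dz^{m-1}}(z^2-1)^{m-1}$ satisfies $P_{m-1}(z)\ge\frac12$ and $0<P'_{m-1}(z)\le\frac12m(m-1)$ for $\frac1{1+\eta_m}\le z\le1$; and $\delta=\max\{2/\eta_m,2/\zeta_m\}$. *)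

(* Defs.v *)
From Stdlib Require Import Reals Factorial.
From Coquelicot Require Import Coquelicot.
Open Scope R_scope.

(* Chebyshev polynomials of the first kind T_k, as polynomial functions on R,
   via the three-term recurrence T_0 = 1, T_1 = z, T_{k+2} = 2 z T_{k+1} - T_k.
   (On (-1,1) this coincides with the Rodrigues-type formula of the paper;
   the polynomial is the extension to all of R, needed since Theta = 1 occurs.) *)
Fixpoint cheb_pair (k : nat) (z : R) : R * R :=
  match k with
  | O => (1, z)
  | S k' => let (a, b) := cheb_pair k' z in (b, 2 * z * b - a)
  end.

Definition chebT (k : nat) (z : R) : R := fst (cheb_pair k z).

Definition legendreP (n : nat) (z : R) : R :=
  / (2 ^ n * INR (fact n)) * Derive_n (fun y => (y ^ 2 - 1) ^ n) n z.

Definition Kfun (m : nat) (r t eta xi : R) : R :=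
  (r + t * eta - 2 * t * eta * xi) ^ m /
  (sqrt (r + t * eta - t * eta * xi) * sqrt (r - xi * t * eta)).

Definition Theta (r t eta xi : R) : R :=
  ((r + t * eta - 2 * t * eta * xi) ^ 2 + r ^ 2 - t ^ 2 * eta ^ 2) /
  (2 * r * (r + t * eta - 2 * t * eta * xi)).

Definition zeta_ok (m : nat) (zeta : R) : Prop :=
  0 < zeta <= 1 /\
  forall z, / (1 + zeta) <= z <= 1 ->
    / 2 <= chebT (m - 1) z <= 1 /\
    0 < Derive (chebT (m - 1)) z <= (INR m - 1) ^ 2.

Definition eta_ok (m : nat) (etam : R) : Prop :=
  0 < etam <= 1 /\
  forall z, / (1 + etam) <= z <= 1 ->
    / 2 <= legendreP (m - 1) z /\
    0 < Derive (legendreP (m - 1)) z <= / 2 * INR m * (INR m - 1).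

Definition C1_pos (w : R -> R) : Prop :=
  forall y, 0 < y -> ex_derive w y /\ continuous (Derive w) y.

(* Main.v *)
Require Import Defs.
From Stdlib Require Import Reals Lra Lia.
From Coquelicot Require Import Coquelicot.
Open Scope R_scope.
Lemma Kder m r t eta xi : (1 <= m)%nat ->
  0 < r + t * eta - 2 * t * eta * xi -> 0 < r + t * eta - t * eta * xi -> 0 < r - xi * t * eta ->
  is_derive (fun s => Kfun m r s eta xi) t
   (Kfun m r t eta xi * (INR m * (eta - 2*eta*xi) / (r + t * eta - 2 * t * eta * xi)
     - (eta - eta*xi) / (2 * (r + t * eta - t * eta * xi)) + xi*eta/(2*(r - xi * t * eta)))).
Proof.
intros Hm HA HB HC. unfold Kfun. auto_derive.
- repeat split; auto. apply Rgt_not_eq, Rmult_gt_0_compat; apply sqrt_lt_R0; auto.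
- set (A := r + t * eta - 2 * t * eta * xi) in *.
  assert (EA : A ^ m = A * A^(m-1)). { replace m with (S (m-1)) at 1 by lia. reflexivity. }
  assert (sB := sqrt_lt_R0 _ HB). assert (sC := sqrt_lt_R0 _ HC).
  assert (eB := sqrt_sqrt _ (Rlt_le _ _ HB)). assert (eC := sqrt_sqrt _ (Rlt_le _ _ HC)).
  set (B := r + t * eta - t * eta * xi) in *. set (C := r - xi * t * eta) in *.
  set (sb := sqrt B) in *. set (sc := sqrt C) in *.
  replace (r + t * eta + - (2 * t * eta * xi)) with A by (unfold A; ring).
  replace (r + t * eta + - (t * eta * xi)) with B by (unfold B; ring).
  replace (r + - (xi * t * eta)) with C by (unfold C; ring).
  fold sb sc. replace (Init.Nat.pred m) with (m-1)%nat by lia. rewrite EA.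
  rewrite <- eB, <- eC. field. repeat split; lra.
Qed.
Lemma Thder r t eta xi : 0 < r -> 0 < r + t * eta - 2 * t * eta * xi ->
  is_derive (fun s => Theta r s eta xi) t
   (- (2 * (xi*(1-xi)) * eta^2 * t * (2*r + t*(eta*(1-2*xi)))) / (r * (r + t * eta - 2 * t * eta * xi)^2)).
Proof.
intros Hr HA. unfold Theta. auto_derive.
- repeat split; auto. apply Rgt_not_eq. apply Rmult_gt_0_compat; lra.
- field. lra.
Qed.
Lemma Thval r t eta xi : 0 < r -> 0 < r + t * eta - 2 * t * eta * xi ->
  Theta r t eta xi = 1 - 2 * (xi*(1-xi)) * eta^2 * t^2 / (r * (r + t * eta - 2 * t * eta * xi)).
Proof. intros. unfold Theta. field. lra. Qed.
Lemma cheb_pair_der : forall k z, ex_derive (fun y => fst (cheb_pair k y)) z /\ ex_derive (fun y => snd (cheb_pair k y)) z.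
Proof.
induction k; intro z.
- simpl; split; auto_derive; auto.
- assert (E: forall y, cheb_pair (S k) y = (snd (cheb_pair k y), 2*y*snd (cheb_pair k y) - fst (cheb_pair k y))).
  { intro y; simpl; destruct (cheb_pair k y); reflexivity. }
  destruct (IHk z) as [H1 H2].
  split.
  + eapply ex_derive_ext. { intro y. rewrite E. reflexivity. } simpl. exact H2.
  + eapply ex_derive_ext. { intro y. rewrite E. reflexivity. } simpl.
    apply (ex_derive_minus (fun y => 2*y*snd (cheb_pair k y)) (fun y => fst (cheb_pair k y))); [|exact H1].
    apply (ex_derive_mult (fun y => 2*y) (fun y => snd (cheb_pair k y))); [|exact H2].
    auto_derive; auto.
Qed.
Lemma chebT_der k z : ex_derive (chebT k) z.
Proof. apply (cheb_pair_der k z). Qed.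
Lemma div_le X D c : 0 < D -> X <= c * D -> X / D <= c.
Proof. intros HD H. unfold Rdiv. apply Rmult_le_reg_r with D; auto.
rewrite Rmult_assoc, Rinv_l; lra. Qed.
Lemma div_ge X D c : 0 < D -> c * D <= X -> c <= X / D.
Proof. intros HD H. unfold Rdiv. apply Rmult_le_reg_r with D; auto.
rewrite Rmult_assoc, Rinv_l; lra. Qed.

Theorem proposition5p2 :
  forall (m : nat) (Rr : R) (w : R -> R) (zetam etam : R),
    (2 <= m)%nat ->
    0 < Rr ->
    C1_pos w ->
    (forall y, Rr <= y -> 0 < w y) ->
    zeta_ok m zetam ->
    eta_ok m etam ->
    let delta := Rmax (2 / etam) (2 / zetam) in
    let Em := INR m + / 8 + 5 * zetam * (INR m - 1) ^ 2 / 3 in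
    forall (r t eta xi : R),
      0 <= xi <= 1 -> 0 <= eta <= 1 ->
      0 < r -> 0 < t ->
      r - t >= Rmax Rr (delta * t) -> Rmax Rr (delta * t) > 0 ->
      let a := r + t * eta - 2 * t * eta * xi in
      Derive (fun s => Kfun m r s eta xi * w (r + s * eta - 2 * s * eta * xi)
                        * chebT (m - 1) (Theta r s eta xi)) t
      >= - (Em * w a / a + Rabs (Derive w a)) * Kfun m r t eta xi.
Proof.
intros m Rr w zetam etam Hm HR Hw Hpos [[Hz0 Hz1] Hz] He delta Em r t eta xi Hxi Heta Hr Ht Hrt Hmax a.
assert (H1 : r - t >= Rr) by (generalize (Rmax_l Rr (delta*t)); lra).
assert (H2 : r - t >= delta * t) by (generalize (Rmax_r Rr (delta*t)); lra).
assert (Hd : delta >= 2 / zetam) by (generalize (Rmax_r (2/etam) (2/zetam)); unfold delta; lra).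
assert (H3 : 2 * t <= zetam * (r - t)).
{ assert (E : 2 / zetam * t * zetam = 2 * t) by (field; lra).
  assert (delta * t * zetam >= 2/zetam * t * zetam) by (apply Rmult_ge_compat_r; [lra|]; apply Rmult_ge_compat_r; lra).
  assert (zetam * (r - t) >= zetam * (delta * t)) by (apply Rmult_ge_compat_l; lra).
  lra. }
assert (Ha1 : a >= r - t).
{ unfold a. assert (0 <= t * (1 - eta)) by (apply Rmult_le_pos; lra).
  assert (0 <= t * eta * (1-xi)) by (apply Rmult_le_pos; [apply Rmult_le_pos|]; lra). lra. }
assert (0 <= t * eta * xi) by (apply Rmult_le_pos; [apply Rmult_le_pos|]; lra).
assert (t * eta <= t) by (assert (0 <= t * (1 - eta)) by (apply Rmult_le_pos; lra); lra).
assert (t * eta * xi <= t * eta) by (assert (0 <= t * eta * (1-xi)) by (apply Rmult_le_pos; [apply Rmult_le_pos|]; lra); lra).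
assert (Ha : 0 < a) by lra.
assert (HB : 0 < r + t * eta - t * eta * xi) by lra.
assert (HC : 0 < r - xi * t * eta) by (replace (xi * t * eta) with (t*eta*xi) by ring; lra).
assert (Hwa : 0 < w a) by (apply Hpos; lra).
assert (H2ta : 2 * t <= zetam * a) by nra.
pose (L := INR m * (eta - 2*eta*xi) / a
     - (eta - eta*xi) / (2 * (r + t * eta - t * eta * xi)) + xi*eta/(2*(r - xi * t * eta))).
pose (Td := - (2 * (xi*(1-xi)) * eta^2 * t * (2*r + t*(eta*(1-2*xi)))) / (r * a^2)).
pose (Kt := Kfun m r t eta xi).
pose (Tt := Theta r t eta xi).
pose (Ct := chebT (m-1) Tt).
pose (Tp := Derive (chebT (m-1)) Tt).
pose (wp := Derive w a).
assert (dK := Kder m r t eta xi ltac:(lia) Ha HB HC). fold Kt a L in dK.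
assert (dA : is_derive (fun s => r + s * eta - 2 * s * eta * xi) t (eta - 2*eta*xi)).
{ auto_derive; auto. ring. }
assert (dW := is_derive_comp w (fun s => r + s * eta - 2 * s * eta * xi) t _ _ (Derive_correct w a (proj1 (Hw a Ha))) dA).
assert (dT := Thder r t eta xi Hr Ha). fold a Td in dT.
assert (dC := is_derive_comp (chebT (m-1)) (fun s => Theta r s eta xi) t _ _ (Derive_correct _ _ (chebT_der (m-1) Tt)) dT).
assert (dKW := is_derive_mult _ _ t _ _ dK dW Rmult_comm).
assert (dF := is_derive_mult _ _ t _ _ dKW dC Rmult_comm).
simpl in dF. unfold plus, mult, scal in dF; simpl in dF. unfold mult in dF; simpl in dF.
rewrite (is_derive_unique _ _ _ dF).
fold wp Tp a Kt Tt Ct.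
assert (HM : 2 <= INR m) by (replace 2 with (INR 2) by (simpl; ring); apply le_INR; lia).
set (M := INR m) in *.
assert (Hp0 : 0 <= xi * (1 - xi)) by (apply Rmult_le_pos; lra).
assert (Hp1 : xi * (1 - xi) <= /4) by (assert (0 <= (xi - /2) * (xi - /2)) by apply Rle_0_sqr; nra).
assert (Hq0 : 0 <= eta ^ 2) by nra.
assert (Hq1 : eta ^ 2 <= 1) by nra.
assert (Hs : -1 <= eta * (1 - 2 * xi) <= 1) by (split; nra).
assert (Hts : - t <= t * (eta * (1 - 2 * xi)) <= t) by (split; nra).
assert (Hra : 0 < r * a) by (apply Rmult_lt_0_compat; lra).
assert (Htr : t * t <= t * r) by nra.
assert (HG : 0 <= 2 * (xi * (1 - xi)) * eta ^ 2 * t ^ 2 / (r * a) <= zetam / 4).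
{ split.
  - apply Rdiv_le_0_compat; [|lra]. assert (0 <= (xi * (1 - xi)) * eta ^ 2) by nra. nra.
  - apply div_le; [lra|].
    assert (2 * (xi * (1 - xi)) * eta ^ 2 <= /2) by nra.
    assert (2 * (xi * (1 - xi)) * eta ^ 2 * t ^ 2 <= /2 * t^2) by (apply Rmult_le_compat_r; nra).
    assert (t * r * 2 <= zetam * a * r) by nra.
    nra. }
assert (HTt : / (1 + zetam) <= Tt <= 1).
{ unfold Tt. rewrite Thval; [|lra|exact Ha]. fold a. split; [|lra].
  replace (/ (1 + zetam)) with (1 / (1 + zetam)) by (field; lra).
  apply div_le; [lra|]. nra. }
destruct (Hz Tt HTt) as [[HC1 HC2] [HT1 HT2]]. fold Ct in HC1, HC2. fold Tp in HT1, HT2.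
set (N := 2 * (xi*(1-xi)) * eta^2 * t * (2*r + t*(eta*(1-2*xi)))).
assert (HN : 0 <= N <= 3 * zetam / 4 * (r * a)).
{ assert (0 <= 2 * (xi * (1 - xi)) * eta ^ 2 <= /2) by (split; nra).
  assert (0 <= t * (2*r + t*(eta*(1-2*xi))) <= 3 * t * r) by (split; nra).
  unfold N. split; nra. }
assert (EU : Td * a = - (N / (r * a))) by (unfold Td; fold N; field; lra).
assert (HU : - (3 * zetam / 4) <= Td * a <= 0).
{ rewrite EU. assert (0 <= N / (r * a) <= 3 * zetam / 4); [|lra].
  split; [apply Rdiv_le_0_compat; lra| apply div_le; lra]. }
set (B := r + t * eta - t * eta * xi) in *.
set (C := r - xi * t * eta) in *.
assert (EV : L * a = M * (eta - 2 * eta * xi) - (eta - eta * xi) * (a / B) / 2 + xi * eta * (a / C) / 2)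
  by (unfold L; fold B C; field; lra).
assert (HqB : a / B <= 1) by (apply div_le; unfold a, B in *; lra).
assert (HqC : 1 <= a / C) by (apply div_ge; unfold a, C in *; [lra|]; replace (xi * t * eta) with (t * eta * xi) by ring; lra).
assert (HV : /2 - M <= L * a).
{ rewrite EV. assert (0 <= (eta - eta * xi) * (1 - a / B)) by nra.
  assert (0 <= xi * eta * (a / C - 1)) by nra.
  assert (0 <= (M - /2) * (1 + eta * (1 - 2 * xi))) by nra. nra. }
set (Y := L * Ct + Td * Tp).
assert (HYa : - Em <= Y * a).
{ unfold Y, Em. fold M.
  assert (HA1 : (L * a) * Ct >= /2 - M) by nra.
  assert (HA2 : (Td * a) * Tp >= - ((M - 1)^2 * (3 * zetam / 4))) by nra.
  assert (0 <= zetam * (M - 1)^2) by nra. nra. }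
assert (HY : - (Em / a) <= Y).
{ assert (Y = (Y * a) / a) by (field; lra). rewrite H5.
  assert (- (Em / a) = (- Em) / a) by (field; lra). rewrite H6.
  apply Rmult_le_compat_r; [apply Rlt_le, Rinv_0_lt_compat; lra| lra]. }
assert (HW : - (Em * w a / a) <= Y * w a).
{ replace (- (Em * w a / a)) with (- (Em / a) * w a) by (field; lra). nra. }
assert (HwA : - Rabs wp <= (eta - 2 * eta * xi) * wp * Ct).
{ assert (-1 <= (eta - 2 * eta * xi) * Ct <= 1) by (split; nra).
  destruct (Rcase_abs wp) as [Hw0|Hw0]; [rewrite Rabs_left| rewrite Rabs_right]; nra. }
assert (HK : 0 < Kt).
{ unfold Kt, Kfun. fold a B C. apply Rdiv_lt_0_compat; [apply pow_lt; lra|].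
  apply Rmult_lt_0_compat; apply sqrt_lt_R0; lra. }
assert (E : (Kt * L * w a + Kt * ((eta - 2 * eta * xi) * wp)) * Ct + Kt * w a * (Td * Tp)
   = Kt * (Y * w a + (eta - 2 * eta * xi) * wp * Ct)) by (unfold Y; ring).
rewrite E.
apply Rle_ge. replace (- (Em * w a / a + Rabs wp) * Kt) with (Kt * (- (Em * w a / a) + - Rabs wp)) by ring.
apply Rmult_le_compat_l; lra.
Qed.
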